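(* For every orthomodular lattice $X$ there is a bijection $\mathrm{char}:\mathrm{KSub}(X)\to\mathbf{OMLatGal}(2,X)$, sending the kernel $a:\downarrow a\to X$ to the morphism $\bar a:2\to X$ with $\bar a_*(0)=1$, $\bar a_*(1)=a^\perp$, $\bar a^*(x)=1$ if $x\le a^\perp$ and $0$ otherwise. It is natural: for every morphism $f:X\to Y$ of $\mathbf{OMLatGal}$, $\mathrm{char}\circ\exists_f=(f\circ-)\circ\mathrm{char}$, i.e. $\mathrm{char}(\exists_f(m))=f\circ\mathrm{char}(m)$ for all $m\in\mathrm{KSub}(X)$.
   Context: An orthomodular lattice is a bounded lattice with an order-reversing involution $x\mapsto x^\perp$ such that $x\wedge x^\perp=0$, $x\vee x^\perp=1$, and $x\le y$ implies $y=x\vee(x^\perp\wedge y)$. $2=\{0,1\}$ is the two-element Boolean algebra. The category $\mathbf{OMLatGal}$ has orthomodular lattices as objects; a morphism $f:X\to Y$ is a pair $(f_*,f^* )$ of order-reversing functions $f_*:X\to Y$, $f^*:Y\to X$ such that $y\le f_*(x)$ iff $x\le f^*(y)$. Identity: both components $x\mapsto x^\perp$. Composition: $(g\circ f)_*=g_*\circ(-)^\perp\circ f_*$, $(g\circ f)^*=f^*\circ(-)^\perp\circ g^*$. Dagger: $(f_*,f^* )^\dagger=(f^*,f_* )$. It is a dagger kernel category (zero object the one-element lattice); for $a\in X$, $\downarrow a=\{u\le a\}$ with complement $u^{\perp_a}=a\wedge u^\perp$, and the downset morphism $a:\downarrow a\to X$ ($a_*(u)=u^\perp$, $a^*(x)=a\wedge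 x^\perp$) is a dagger kernel; every kernel into $X$ is isomorphic to exactly one such. $\mathrm{KSub}(X)$ denotes the poset of dagger-mono kernels into $X$ modulo isomorphism. In a dagger kernel category $\mathrm{coker}(g)=\ker(g^\dagger)^\dagger$ and $\exists_f(m)=\ker(\mathrm{coker}(f\circ m))$. *)

(* Defs.v *)
From Stdlib Require Import ClassicalEpsilon.

Set Implicit Arguments.

Record OMLstr := {
  car :> Type;
  le : car -> car -> Prop;
  meet : car -> car -> car;
  join : car -> car -> car;
  bot : car;
  top : car;
  orth : car -> car }.

Arguments le {o} _ _.
Arguments meet {o} _ _.
Arguments join {o} _ _.
Arguments bot {o}.
Arguments top {o}.
Arguments orth {o} _.

Record is_OML (X : OMLstr) : Prop := {
  le_refl : forall x : X, le x x;
  le_trans : forall x y z : X, le x y -> le y z -> le x z;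
  le_antisym : forall x y : X, le x y -> le y x -> x = y;
  meet_l : forall x y : X, le (meet x y) x;
  meet_r : forall x y : X, le (meet x y) y;
  meet_glb : forall x y z : X, le z x -> le z y -> le z (meet x y);
  join_l : forall x y : X, le x (join x y);
  join_r : forall x y : X, le y (join x y);
  join_lub : forall x y z : X, le x z -> le y z -> le (join x y) z;
  bot_le : forall x : X, le bot x;
  le_top : forall x : X, le x top;
  orth_anti : forall x y : X, le x y -> le (orth y) (orth x);
  orth_invol : forall x : X, orth (orth x) = x;
  meet_orth : forall x : X, meet x (orth x) = bot;
  join_orth : forall x : X, join x (orth x) = top;
  orthomod : forall x y : X, le x y -> y = join x (meet (orth x) y) }.

(* Morphisms of OMLatGal: pairs of maps; [is_mor] is the antitone Galois condition. *)
Record Hom (X Y : OMLstr) := mkHom { fs : X -> Y ; fu : Y -> X }.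
Arguments mkHom {X Y} _ _.
Arguments fs {X Y} _ _.
Arguments fu {X Y} _ _.

Definition is_mor {X Y : OMLstr} (f : Hom X Y) : Prop :=
  (forall x x' : X, le x x' -> le (fs f x') (fs f x)) /\
  (forall y y' : Y, le y y' -> le (fu f y') (fu f y)) /\
  (forall (x : X) (y : Y), le y (fs f x) <-> le x (fu f y)).

Definition heq {X Y : OMLstr} (f g : Hom X Y) : Prop :=
  (forall x, fs f x = fs g x) /\ (forall y, fu f y = fu g y).

Definition idm (X : OMLstr) : Hom X X := mkHom (fun x => orth x) (fun x => orth x).

Definition comp {X Y Z : OMLstr} (g : Hom Y Z) (f : Hom X Y) : Hom X Z :=
  mkHom (fun x => fs g (orth (fs f x))) (fun z => fu f (orth (fu g z))).

Definition dag {X Y : OMLstr} (f : Hom X Y) : Hom Y X := mkHom (fu f) (fs f).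

Definition zero_obj : OMLstr :=
  {| car := unit; le := fun _ _ => True; meet := fun _ _ => tt;
     join := fun _ _ => tt; bot := tt; top := tt; orth := fun _ => tt |}.

Definition to_zero (X : OMLstr) : Hom X zero_obj :=
  mkHom (fun _ => (tt : zero_obj)) (fun _ => (top : X)).
Definition from_zero (Z : OMLstr) : Hom zero_obj Z :=
  mkHom (fun _ => (top : Z)) (fun _ => (tt : zero_obj)).

Definition zero_mor (X Z : OMLstr) : Hom X Z := comp (from_zero Z) (to_zero X).

Definition is_kernel {K X Z : OMLstr} (k : Hom K X) (g : Hom X Z) : Prop :=
  heq (comp g k) (zero_mor K Z) /\
  forall (W : OMLstr) (h : Hom W X), is_OML W -> is_mor h ->
    heq (comp g h) (zero_mor W Z) ->
    exists u : Hom W K, is_mor u /\ heq (comp k u) h /\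
      forall u' : Hom W K, is_mor u' -> heq (comp k u') h -> heq u' u.

Definition is_dagger_mono {K X : OMLstr} (k : Hom K X) : Prop :=
  heq (comp (dag k) k) (idm K).

(* k represents an element of KSub(X): a dagger-mono kernel (of some morphism). *)
Definition is_dkernel {K X : OMLstr} (k : Hom K X) : Prop :=
  is_OML K /\ is_mor k /\ is_dagger_mono k /\
  exists (Z : OMLstr) (g : Hom X Z), is_OML Z /\ is_mor g /\ is_kernel k g.

(* Isomorphism of kernels into X (equality in KSub(X)). *)
Definition ksub_iso {M N X : OMLstr} (m : Hom M X) (n : Hom N X) : Prop :=
  exists (p : Hom M N) (q : Hom N M), is_mor p /\ is_mor q /\
    heq (comp q p) (idm M) /\ heq (comp p q) (idm N) /\ heq (comp n p) m.

Definition two : OMLstr :=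
  {| car := bool; le := fun b c => b = true -> c = true; meet := andb;
     join := orb; bot := false; top := true; orth := negb |}.

Section Down.
Variables (X : OMLstr) (HX : is_OML X) (a : X).

Definition down_car := { u : X | le u a }.

Definition down : OMLstr :=
  {| car := down_car;
     le := fun u v => le (proj1_sig u) (proj1_sig v);
     meet := fun u v => exist (fun u => le u a) (meet (proj1_sig u) (proj1_sig v))
               (le_trans HX _ _ _ (meet_l HX _ _) (proj2_sig u));
     join := fun u v => exist (fun u => le u a) (join (proj1_sig u) (proj1_sig v))
               (join_lub HX _ _ _ (proj2_sig u) (proj2_sig v));
     bot := exist (fun u => le u a) bot (bot_le HX a);
     top := exist (fun u => le u a) a (le_refl HX a);
     orth := fun u => exist (fun u => le u a) (meet a (orth (proj1_sig u))) (meet_l HX _ _) |}.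

Definition downmor : Hom down X :=
  mkHom (fun u : down => orth (proj1_sig u))
        (fun x => (exist (fun u => le u a) (meet a (orth x)) (meet_l HX _ _) : down)).
End Down.

Definition abar {X : OMLstr} (a : X) : Hom two X :=
  mkHom (fun b : two => if b then orth a else top)
        (fun x => (if excluded_middle_informative (le x (orth a)) then true else false : two)).

(* Main.v *)
Require Import Defs.
From Stdlib Require Import ClassicalEpsilon ProofIrrelevance.

Section OML.
Context {X : OMLstr} (HX : is_OML X).

Lemma meet_comm (x y : X) : meet x y = meet y x.
Proof. apply (le_antisym HX); apply (meet_glb HX); first [apply (meet_l HX) | apply (meet_r HX)]. Qed.

Lemma orth_swap (x y : X) : le x (orth y) -> le y (orth x).
Proof. intro H; apply (orth_anti HX) in H; rewrite (orth_invol HX) in H; exact H. Qed.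

Lemma orth_swap' (x y : X) : le (orth x) y -> le (orth y) x.
Proof. intro H; apply (orth_anti HX) in H; rewrite (orth_invol HX) in H; exact H. Qed.

Lemma le_bot_eq (x : X) : le x bot -> x = bot.
Proof. intro H; apply (le_antisym HX); auto; apply (bot_le HX). Qed.

Lemma top_le_eq (x : X) : le top x -> x = top.
Proof. intro H; apply (le_antisym HX); auto; apply (le_top HX). Qed.

Lemma meet_eq_l (x y : X) : le x y -> meet x y = x.
Proof. intro H; apply (le_antisym HX). apply (meet_l HX). apply (meet_glb HX); auto; apply (le_refl HX). Qed.

Lemma join_bot (x : X) : join x bot = x.
Proof. apply (le_antisym HX). apply (join_lub HX). apply (le_refl HX). apply (bot_le HX). apply (join_l HX). Qed.

Lemma orth_top : orth (top : X) = bot.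
Proof.
  rewrite <- (meet_orth HX top). rewrite meet_comm. symmetry. apply meet_eq_l. apply (le_top HX).
Qed.

Lemma le_ext (p q : X) : (forall w, le w p <-> le w q) -> p = q.
Proof. intro H; apply (le_antisym HX); [apply H | apply H]; apply (le_refl HX). Qed.

Lemma down_invol (a u : X) : le u a -> meet a (orth (meet a (orth u))) = u.
Proof.
  intro Hu. set (w := meet a (orth (meet a (orth u)))).
  assert (Huw : le u w).
  { apply (meet_glb HX); auto. apply orth_swap. apply (meet_r HX). }
  pose proof (orthomod HX _ _ Huw) as E.
  assert (Eb : meet (orth u) w = bot).
  { apply le_bot_eq. rewrite <- (meet_orth HX (meet a (orth u))).
    apply (meet_glb HX).
    - apply (meet_glb HX). apply (le_trans HX _ w). apply (meet_r HX). apply (meet_l HX). apply (meet_l HX).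
    - apply (le_trans HX _ w). apply (meet_r HX). apply (meet_r HX). }
  rewrite Eb, join_bot in E. exact E.
Qed.

Lemma sasaki (a x : X) : le x (join (orth a) (meet a (orth (meet a (orth x))))).
Proof.
  assert (H1 : le (orth a) (orth (meet a (orth x)))) by (apply (orth_anti HX); apply (meet_l HX)).
  pose proof (orthomod HX _ _ H1) as E. rewrite (orth_invol HX) in E.
  rewrite <- E. apply orth_swap. apply (meet_r HX).
Qed.
End OML.

Section Mor.
Context {X Y : OMLstr} (HX : is_OML X) (HY : is_OML Y) {f : Hom X Y} (Hf : is_mor f).

Lemma fs_anti x x' : le x x' -> le (fs f x') (fs f x).
Proof. apply Hf. Qed.
Lemma fu_anti y y' : le y y' -> le (fu f y') (fu f y).
Proof. apply Hf. Qed.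
Lemma gal x y : le y (fs f x) <-> le x (fu f y).
Proof. apply Hf. Qed.

Lemma fs_bot : fs f bot = top.
Proof. apply (top_le_eq HY). apply gal. apply (bot_le HX). Qed.
End Mor.

Lemma comp_mor (X Y Z : OMLstr) (HY : is_OML Y) (f : Hom X Y) (g : Hom Y Z) :
  is_mor f -> is_mor g -> is_mor (comp g f).
Proof.
  intros Hf Hg; split; [|split]; simpl.
  - intros x x' H. apply (fs_anti Hg). apply (orth_anti HY). apply (fs_anti Hf _ _ H).
  - intros y y' H. apply (fu_anti Hf). apply (orth_anti HY). apply (fu_anti Hg _ _ H).
  - intros x z. rewrite (gal Hg). split; intro H.
    + apply (gal Hf). apply (orth_swap' HY). exact H.
    + apply (gal Hf) in H. apply (orth_swap' HY). exact H.
Qed.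

Lemma dag_mor (X Y : OMLstr) (f : Hom X Y) : is_mor f -> is_mor (dag f).
Proof.
  intros (H1 & H2 & H3); split; [|split]; simpl; auto.
  intros x y; split; apply H3.
Qed.

Lemma adj_unique (X Y : OMLstr) (HX : is_OML X) (f g : Hom X Y) :
  is_mor f -> is_mor g -> (forall x, fs f x = fs g x) -> forall y, fu f y = fu g y.
Proof.
  intros Hf Hg E y. apply (le_ext HX). intro w.
  rewrite <- (gal Hf), <- (gal Hg), E. tauto.
Qed.

Lemma down_eq (X : OMLstr) (HX : is_OML X) (a : X) (u v : down HX a) :
  proj1_sig u = proj1_sig v -> u = v.
Proof.
  destruct u as [u Hu], v as [v Hv]; simpl; intros ->. f_equal. apply proof_irrelevance.
Qed.

Lemma down_OML (X : OMLstr) (HX : is_OML X) (a : X) : is_OML (down HX a).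
Proof.
  constructor; simpl.
  - intros; apply (le_refl HX).
  - intros x y z; apply (le_trans HX).
  - intros x y H1 H2; apply (down_eq _ HX a); apply (le_antisym HX); auto.
  - intros; apply (meet_l HX).
  - intros; apply (meet_r HX).
  - intros; apply (meet_glb HX); auto.
  - intros; apply (join_l HX).
  - intros; apply (join_r HX).
  - intros; apply (join_lub HX); auto.
  - intros; apply (bot_le HX).
  - intros [x Hx]; exact Hx.
  - intros x y H. apply (meet_glb HX). apply (meet_l HX).
    apply (le_trans HX _ (orth (proj1_sig y))). apply (meet_r HX). apply (orth_anti HX _ _ H).
  - intros [x Hx]; apply (down_eq _ HX a); simpl. apply (down_invol HX _ _ Hx).
  - intros [x Hx]; apply (down_eq _ HX a); simpl. apply (le_bot_eq HX).
    rewrite <- (meet_orth HX x). apply (meet_glb HX). apply (meet_l HX).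
    apply (le_trans HX _ (meet a (orth x))). apply (meet_r HX). apply (meet_r HX).
  - intros [x Hx]; apply (down_eq _ HX a); simpl. rewrite (meet_comm HX). symmetry. apply (orthomod HX _ _ Hx).
  - intros [x Hx] [y Hy] H; apply (down_eq _ HX a); simpl in *.
    assert (E : meet (meet a (orth x)) y = meet (orth x) y).
    { apply (le_antisym HX); apply (meet_glb HX).
      - apply (le_trans HX _ (meet a (orth x))). apply (meet_l HX). apply (meet_r HX).
      - apply (meet_r HX).
      - apply (meet_glb HX). apply (le_trans HX _ y). apply (meet_r HX). exact Hy. apply (meet_l HX).
      - apply (meet_r HX). }
    rewrite E. apply (orthomod HX _ _ H).
Qed.

Lemma downmor_mor (X : OMLstr) (HX : is_OML X) (a : X) : is_mor (downmor HX a).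
Proof.
  split; [|split]; simpl.
  - intros x x' H; apply (orth_anti HX _ _ H).
  - intros y y' H. apply (meet_glb HX). apply (meet_l HX).
    apply (le_trans HX _ (orth y')). apply (meet_r HX). apply (orth_anti HX _ _ H).
  - intros [u Hu] y; simpl; split; intro H.
    + apply (meet_glb HX); auto. apply (orth_swap HX); exact H.
    + apply (orth_swap HX). apply (le_trans HX _ (meet a (orth y))); auto. apply (meet_r HX).
Qed.

Lemma comp_zero_down (X Z : OMLstr) (HX : is_OML X) (HZ : is_OML Z) (g : Hom X Z)
  (Hg : is_mor g) (v : X) : fs g v = top ->
  heq (comp g (downmor HX v)) (zero_mor (down HX v) Z).
Proof.
  intro E. split.
  - intros [t Ht]; simpl. rewrite (orth_invol HX). apply (top_le_eq HZ). rewrite <- E.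
    apply (fs_anti Hg _ _ Ht).
  - intro z; apply (down_eq _ HX v); simpl. rewrite (orth_invol HX). apply (meet_eq_l HX).
    apply (gal Hg). rewrite E. apply (le_top HZ).
Qed.

Section Ker.
Context {K X Z : OMLstr} (HK : is_OML K) (HX : is_OML X) (HZ : is_OML Z)
  {k : Hom K X} {g : Hom X Z} (Hk : is_mor k) (Hg : is_mor g) (Hker : is_kernel k g).

Lemma factor_down (v : X) : fs g v = top ->
  exists u : Hom (down HX v) K, is_mor u /\ heq (comp k u) (downmor HX v).
Proof.
  intro E. destruct Hker as [_ H].
  destruct (H (down HX v) (downmor HX v) (down_OML _ HX v) (downmor_mor _ HX v)
    (comp_zero_down _ _ HX HZ g Hg v E)) as (u & Hu & Hc & _).
  exists u; auto.
Qed.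

Lemma ker_top : fs g (orth (fs k top)) = top.
Proof. destruct Hker as [[H _] _]. exact (H top). Qed.

Lemma ker_max (v : X) : fs g v = top -> le v (orth (fs k top)).
Proof.
  intro E. destruct (factor_down v E) as (u & Hu & [Hc _]).
  apply (orth_swap HX). specialize (Hc top). simpl in Hc. rewrite <- Hc.
  apply (fs_anti Hk). apply (le_top HK).
Qed.

Lemma ker_img (y : X) : le (fs k top) y -> exists x, fs k x = y.
Proof.
  intro Hy. destruct (factor_down _ ker_top) as (u & Hu & [Hc _]).
  assert (P : le (orth y) (orth (fs k top))) by apply (orth_anti HX _ _ Hy).
  specialize (Hc (exist _ (orth y) P)). simpl in Hc. rewrite (orth_invol HX) in Hc.
  eexists; exact Hc.
Qed.

Lemma ker_char (c : X) : (forall v, fs g v = top <-> le v c) -> orth (fs k top) = c.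
Proof.
  intro H. apply (le_antisym HX).
  - apply H. apply ker_top.
  - apply ker_max. apply H. apply (le_refl HX).
Qed.
End Ker.

Lemma down_kernel (X : OMLstr) (HX : is_OML X) (a : X) :
  is_kernel (downmor HX a) (dag (downmor HX (orth a))).
Proof.
  split.
  - split.
    + intros [t Ht]; apply (down_eq _ HX); simpl. rewrite !(orth_invol HX).
      apply (meet_eq_l HX). apply (orth_anti HX _ _ Ht).
    + intros [z Hz]; apply (down_eq _ HX); simpl. rewrite !(orth_invol HX).
      apply (meet_eq_l HX). apply (orth_swap HX). exact Hz.
  - intros W h HW Hh [Hz1 _].
    assert (Ha : forall w, le (orth a) (fs h w)).
    { intro w. specialize (Hz1 w). apply (f_equal (@proj1_sig _ _)) in Hz1. simpl in Hz1.
      rewrite (orth_invol HX) in Hz1. rewrite <- Hz1. apply (meet_r HX). }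
    set (u := mkHom (fun w : W => (exist (fun x => le x a) (meet a (fs h w)) (meet_l HX _ _) : down HX a))
                    (fun v : down HX a => fu h (proj1_sig v))).
    assert (Hu : is_mor u).
    { split; [|split]; simpl.
      - intros w w' H. apply (meet_glb HX). apply (meet_l HX).
        apply (le_trans HX _ (fs h w')). apply (meet_r HX). apply (fs_anti Hh _ _ H).
      - intros y y' H. apply (fu_anti Hh _ _ H).
      - intros w [v Hv]; simpl. rewrite <- (gal Hh). split; intro H.
        + apply (le_trans HX _ _ _ H). apply (meet_r HX).
        + apply (meet_glb HX); auto. }
    assert (Hfs : forall w, orth (meet a (orth (meet a (fs h w)))) = fs h w).
    { intro w. assert (Hy : le (orth (fs h w)) a) by (apply (orth_swap' HX); apply Ha).
      pose proof (down_invol HX _ _ Hy) as E. rewrite (orth_invol HX) in E.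
      rewrite E. apply (orth_invol HX). }
    exists u; split; [exact Hu|split].
    + split.
      * intro w; simpl. apply Hfs.
      * intro x; simpl. apply (le_ext HW). intro w. rewrite <- !(gal Hh).
        assert (Hy := Ha w). set (y := fs h w) in *. split; intro H.
        -- apply (le_trans HX _ _ _ (sasaki HX a x)). apply (join_lub HX); auto.
        -- apply (le_trans HX _ (orth (meet a (orth x)))). apply (meet_r HX).
           apply (orth_swap' HX). apply (meet_glb HX).
           apply (orth_swap' HX). exact Hy.
           apply (orth_anti HX _ _ H).
    + intros u' Hu' [Hc _].
      assert (Efs : forall w, fs u' w = fs u w).
      { intro w. specialize (Hc w). simpl in Hc.
        destruct (fs u' w) as [t Ht] eqn:Et. apply (down_eq _ HX); simpl in *.
        rewrite <- Hc. symmetry. apply (down_invol HX _ _ Ht). }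
      split; [exact Efs|]. apply (adj_unique _ _ HW); auto.
Qed.

Lemma abar_mor (X : OMLstr) (HX : is_OML X) (c : X) : is_mor (abar c).
Proof.
  split; [|split]; simpl.
  - intros [|] [|] H; simpl; try apply (le_refl HX); try apply (le_top HX).
    discriminate (H eq_refl).
  - intros y y' H.
    destruct (excluded_middle_informative (le y' (orth c))) as [H1|H1];
    destruct (excluded_middle_informative (le y (orth c))) as [H2|H2]; auto.
    intros _. exfalso. apply H2. apply (le_trans HX _ _ _ H H1).
  - intros [|] y; destruct (excluded_middle_informative (le y (orth c))) as [H|H];
      split; intro H'; auto; try discriminate (H' eq_refl); try contradiction;
      try apply (le_top HX); intro; discriminate.
Qed.

Lemma if_iff (P Q : Prop) (e1 : {P} + {~P}) (e2 : {Q} + {~Q}) :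
  (P <-> Q) -> (if e1 then true else false) = (if e2 then true else false).
Proof. intro H; destruct e1, e2; tauto. Qed.

Theorem mainTheorem9 :
  exists ch : forall (X K : OMLstr), Hom K X -> Hom two X,
  forall (X : OMLstr) (HX : is_OML X),
    (forall (K : OMLstr) (k : Hom K X), is_dkernel k -> is_mor (ch X K k)) /\
    (forall (K K' : OMLstr) (k : Hom K X) (k' : Hom K' X),
        is_dkernel k -> is_dkernel k' -> ksub_iso k k' ->
        heq (ch X K k) (ch X K' k')) /\
    (forall (K K' : OMLstr) (k : Hom K X) (k' : Hom K' X),
        is_dkernel k -> is_dkernel k' -> heq (ch X K k) (ch X K' k') ->
        ksub_iso k k') /\
    (forall g : Hom two X, is_mor g ->
        exists (K : OMLstr) (k : Hom K X), is_dkernel k /\ heq (ch X K k) g) /\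
    (forall a : X, heq (ch X (down HX a) (downmor HX a)) (abar a)) /\
    (forall (Y : OMLstr) (HY : is_OML Y) (f : Hom X Y), is_mor f ->
      forall (M : OMLstr) (m : Hom M X), is_dkernel m ->
      forall (J : OMLstr) (j : Hom J Y), is_dkernel j -> is_kernel j (dag (comp f m)) ->
      forall (K : OMLstr) (k : Hom K Y), is_dkernel k -> is_kernel k (dag j) ->
        heq (ch Y K k) (comp f (ch X M m))).
Proof.
  exists (fun X K k => abar (orth (fs k top))).
  intros X HX. split; [|split; [|split; [|split; [|split]]]].
  -
    intros K k _. apply abar_mor; exact HX.
  -
    intros K K' k k' (HK & Hk & _) (HK' & Hk' & _) (p & q & Hp & Hq & Hqp & [Hpq _] & [Hkp _]).
    assert (E : fs k top = fs k' top).
    { apply (le_antisym HX).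
      - assert (E2 : fs k (orth (fs q top)) = fs k' top).
        { rewrite <- Hkp. simpl in Hpq |- *. rewrite Hpq, (orth_invol HK'). reflexivity. }
        rewrite <- E2. apply (fs_anti Hk). apply (le_top HK).
      - rewrite <- Hkp. apply (fs_anti Hk'). apply (le_top HK'). }
    rewrite E. split; reflexivity.
  -
    intros K K' k k' (HK & Hk & Hdk & Z & g & HZ & Hg & Hker)
      (HK' & Hk' & Hdk' & Z' & g' & HZ' & Hg' & Hker') [Hh _].
    specialize (Hh true). simpl in Hh. rewrite !(orth_invol HX) in Hh.
    destruct Hdk as [Hdk _]. destruct Hdk' as [Hdk' _]. simpl in Hdk, Hdk'.
    assert (I1 : forall x, exists w, fs k x = fs k' w).
    { intro x. destruct (ker_img HX HZ' Hg' Hker' (fs k x)) as [w Hw].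
      rewrite <- Hh. apply (fs_anti Hk). apply (le_top HK).
      exists w; auto. }
    assert (I2 : forall x, exists w, fs k' x = fs k w).
    { intro x. destruct (ker_img HX HZ Hg Hker (fs k' x)) as [w Hw].
      rewrite Hh. apply (fs_anti Hk'). apply (le_top HK').
      exists w; auto. }
    assert (Hret : forall x, fu k (orth (fs k' (orth (fu k' (orth (fs k x)))))) = orth x).
    { intro x. destruct (I1 x) as [w Hw]. rewrite Hw, Hdk', (orth_invol HK'), <- Hw. apply Hdk. }
    assert (Hret' : forall x, fu k' (orth (fs k (orth (fu k (orth (fs k' x)))))) = orth x).
    { intro x. destruct (I2 x) as [w Hw]. rewrite Hw, Hdk, (orth_invol HK), <- Hw. apply Hdk'. }
    assert (Hfs : forall x, fs k' (orth (fu k' (orth (fs k x)))) = fs k x).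
    { intro x. destruct (I1 x) as [w Hw]. rewrite Hw, Hdk', (orth_invol HK'). reflexivity. }
    exists (comp (dag k') k), (comp (dag k) k').
    split; [apply (comp_mor _ _ _ HX); auto; apply dag_mor; auto|].
    split; [apply (comp_mor _ _ _ HX); auto; apply dag_mor; auto|].
    split; [split; simpl; auto|].
    split; [split; simpl; auto|].
    split; simpl; auto.
    intro y. apply (le_ext HK). intro x.
    rewrite <- (gal Hk), <- (gal Hk).
    destruct (I1 x) as [w Hw]. rewrite Hw, (gal Hk' w (orth _)), (gal Hk' w y), Hdk', (orth_invol HK').
    tauto.
  -
    intros g Hg. set (a := orth (fs g true)).
    exists (down HX a), (downmor HX a). split.
    + split; [apply down_OML|split; [apply downmor_mor|split]].
      * split; intro x; apply (down_eq _ HX); simpl; rewrite (orth_invol HX); reflexivity.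
      * exists (down HX (orth a)), (dag (downmor HX (orth a))).
        split; [apply down_OML|split; [apply dag_mor; apply downmor_mor|apply down_kernel]].
    + unfold a; simpl. split.
      * intros [|]; simpl.
        -- rewrite !(orth_invol HX). reflexivity.
        -- symmetry. apply (top_le_eq HX). apply (gal Hg). simpl. discriminate.
      * intro y. unfold abar; simpl. rewrite !(orth_invol HX).
        destruct (excluded_middle_informative _) as [H|H].
        -- symmetry. apply (gal Hg) in H. simpl in H. apply H. reflexivity.
        -- destruct (fu g y) eqn:E; auto. exfalso. apply H. apply (gal Hg). simpl. auto.
  -
    intro a. simpl. rewrite (orth_invol HX). split; reflexivity.
  -
    intros Y HY f Hf M m (HM & Hm & _) J j (HJ & Hj & _) Hjker K k (HK & Hk & _) Hkker.
    assert (Ej : orth (fs j top) = fs f (orth (fs m top))).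
    { apply (ker_char HJ HY HM Hj (dag_mor _ _ _ (comp_mor _ _ _ HX _ _ Hm Hf)) Hjker).
      intro v; simpl. split; intro H.
      - apply (gal Hf). apply (orth_swap' HX). apply (gal Hm). rewrite H. apply (le_top HM).
      - apply (top_le_eq HM). apply (gal Hm). apply (orth_swap' HX). apply (gal Hf). exact H. }
    assert (Ek : orth (fs k top) = fs j top).
    { apply (ker_char HK HY HJ Hk (dag_mor _ _ _ Hj) Hkker).
      intro v; simpl. split; intro H.
      - apply (gal Hj). rewrite H. apply (le_top HJ).
      - apply (top_le_eq HJ). apply (gal Hj). exact H. }
    assert (E : fs k top = fs f (orth (fs m top))).
    { rewrite <- Ej, <- Ek, (orth_invol HY). reflexivity. }
    split.
    + intros [|]; simpl.
      * rewrite !(orth_invol HY), (orth_invol HX). exact E.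
      * rewrite (orth_top HX). symmetry. apply (fs_bot HX HY Hf).
    + intro y; simpl. apply if_iff. rewrite (orth_invol HY), (orth_invol HX), E.
      rewrite (gal Hf). split; apply (orth_swap' HX).
Qed.
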